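(* Let $T$ be a tree. Then $\phi(K_1\nabla T)=\lfloor v(T)/2\rfloor$.
   Context: $v(T)$ is the number of vertices of $T$; $K_1\nabla T$ is obtained from $T$ by adding a new vertex adjacent to all vertices of $T$. For a graph $G$, $\phi(G)$ is the maximum number of pairwise edge-disjoint cycles in $G$. *)

(* Defs.v *)
From mathcomp Require Import all_boot.
Set Implicit Arguments. Unset Strict Implicit. Unset Printing Implicit Defensive.

Section Graphs.
Variable V : finType.

Definition simple_graph (e : rel V) : Prop := symmetric e /\ irreflexive e.

Definition gcycle (e : rel V) (c : seq V) : bool :=
  [&& 3 <= size c, uniq c & cycle e c].

Definition cycle_edges (c : seq V) : {set {set V}} :=
  [set [set x; next c x] | x in c].

Definition edge_disjoint_cycles (e : rel V) (cs : seq (seq V)) : Prop :=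
  all (gcycle e) cs /\
  pairwise (fun c d => [disjoint cycle_edges c & cycle_edges d]) cs.

Definition has_cycle_packing (e : rel V) (k : nat) : Prop :=
  exists cs, edge_disjoint_cycles e cs /\ size cs = k.

Definition is_phi (e : rel V) (k : nat) : Prop :=
  has_cycle_packing e k /\ forall k', has_cycle_packing e k' -> k' <= k.

Definition connected (e : rel V) : Prop := forall x y, connect e x y.

Definition is_tree (e : rel V) : Prop :=
  [/\ simple_graph e, 0 < #|V|, connected e & forall c, ~~ gcycle e c].

(* K_1 \nabla T: add a new vertex (None) adjacent to all vertices. *)
Definition join_K1 (e : rel V) : rel (option V) :=
  fun x y => match x, y with
             | Some a, Some b => e a b
             | None, Some _ | Some _, None => true
             | None, None => false
             end.
End Graphs.

(* Main.v *)
Require Import Defs.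
From mathcomp Require Import all_boot zify.
Set Implicit Arguments. Unset Strict Implicit. Unset Printing Implicit Defensive.

Section Main.
Variable V : finType.
Variable e : rel V.

Definition cyc (q : seq V) : seq (option V) := None :: map Some q.
Definition good_path (q : seq V) := [&& 1 < size q, uniq q & sorted e q].
Definition ends (q : seq V) : seq V := if q is a :: t then [:: a; last a t] else [::].
Fixpoint uedges (q : seq V) : seq {set V} :=
  if q is x :: q' then (if q' is y :: _ then [set x; y] :: uedges q' else [::]) else [::].

Lemma cyc_gcycle q : gcycle (join_K1 e) (cyc q) = good_path q.
Proof.
case: q => [|a t]; first by [].
rewrite /gcycle /good_path /cyc /= !ltnS size_map.
have -> : (None \in Some a :: [seq Some i | i <- t]) = false.
  by rewrite inE; apply/negbTE/negP => /mapP [].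
rewrite (map_inj_uniq (@Some_inj _)) rcons_path last_map path_map andbT /=.
have -> : (Some a \in [seq Some i | i <- t]) = (a \in t) by rewrite mem_map //; exact: Some_inj.
by [].
Qed.

End Main.
Arguments ends {V} q.
Arguments cyc {V} q.
Arguments uedges {V} q.

Section Main.
Variable V : finType.
Variable e : rel V.

Lemma next_at_some v a t : v \in a :: t ->
  (exists2 w : V, next_at (Some v) None (Some a) (map Some t) = Some w & [set v; w] \in uedges (a::t))
  \/ (next_at (Some v) None (Some a) (map Some t) = None /\ v = last a t).
Proof.
elim: t a => [|b t IH] a /=.
  by rewrite inE => /eqP ->; rewrite eqxx; right.
case: (eqVneq v a) => [->|nva]; first by rewrite eqxx; left; exists b => //; rewrite inE eqxx.
have -> : (Some v == Some a) = false by apply/negbTE; apply: contra nva => /eqP [->].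
rewrite inE (negbTE nva) /= => /IH [[w -> hw]|[-> ->]]; last by right.
by left; exists w => //; rewrite inE hw orbT.
Qed.

Lemma next_at_last a t : uniq (a :: t) ->
  next_at (Some (last a t)) (None : option V) (Some a) (map Some t) = None.
Proof.
elim: t a => [|b t IH] a /=; first by rewrite eqxx.
rewrite inE negb_or => /andP [/andP [nab nat] ut].
have -> : (Some (last b t) == Some a) = false.
  apply/negbTE/negP => /eqP [] h.
  move: nab nat; rewrite -h; clear IH; case: t {ut h} => [|c t]; rewrite ?eqxx // => _; by rewrite /= mem_last.
by apply: IH.
Qed.

Lemma cyc_edgesP (q : seq V) (E : {set option V}) : 0 < size q -> E \in cycle_edges (cyc q) ->
  (exists2 a, a \in ends q & E = [set None; Some a]) \/
  (exists2 A, A \in uedges q & E = Some @: A).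
Proof.
case: q => [//|a t] _ /imsetP [x]; rewrite /cyc /= inE => /orP [/eqP ->|].
  by rewrite eqxx => ->; left; exists a => //; rewrite inE eqxx.
move=> xin; have /mapP [v vin ->] : x \in map Some (a :: t) by [].
move=> ->.
have -> : (Some v == None) = false by [].
case: (next_at_some vin) => [[w -> hw]|[-> ->]].
  by right; exists [set v; w] => //; rewrite imsetU1 imset_set1.
by left; exists (last a t); rewrite ?inE ?eqxx ?orbT //; apply/setP => z; rewrite !inE orbC.
Qed.

Lemma cyc_edge_ends (q : seq V) a : good_path e q -> a \in ends q ->
  [set None; Some a] \in cycle_edges (cyc q).
Proof.
case: q => [//|b t] /and3P [_ ut _]; rewrite /= !inE => /orP [] /eqP ->.
  by apply/imsetP; exists None; rewrite /cyc ?inE //= eqxx.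
apply/imsetP; exists (Some (last b t)).
  by rewrite /cyc inE (mem_map (@Some_inj _)) mem_last orbT.
rewrite /cyc /next /=.
by rewrite next_at_last //; apply/setP => z; rewrite !inE orbC.
Qed.

End Main.

Section Main.
Variable V : finType.
Variable e : rel V.

Lemma noNone (c : seq (option V)) : None \notin c -> exists c', c = map Some c'.
Proof.
elim: c => [|[x|] c IH]; first by exists [::].
  by rewrite inE /= => /IH [c' ->]; exists (x :: c').
by rewrite inE eqxx.
Qed.

Lemma cycle_edges_rot n (c : seq (option V)) : uniq c -> cycle_edges (rot n c) = cycle_edges c.
Proof.
move=> uc; apply/setP => E; apply/imsetP/imsetP => [[x xin ->]|[x xin ->]].
  by exists x; rewrite ?next_rot // -(mem_rot n).
by exists x; rewrite ?next_rot // mem_rot.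
Qed.

Lemma gcycle_norm (c : seq (option V)) : (forall c', ~~ gcycle e c') ->
  gcycle (join_K1 e) c -> exists q, good_path e q /\ cycle_edges c = cycle_edges (cyc q).
Proof.
move=> acyc gc.
have Nc : None \in c.
  apply/negPn/negP => /noNone [c' def]; move: gc; rewrite def.
  have -> : gcycle (join_K1 e) (map Some c') = gcycle e c'.
    by rewrite /gcycle size_map (map_inj_uniq (@Some_inj _)) cycle_map.
  by apply/negP/acyc.
have uc : uniq c by case/and3P: gc.
case/rot_to: Nc => i r def.
have : uniq (None :: r) by rewrite -def rot_uniq.
rewrite cons_uniq => /andP [/noNone [q defr] _].
exists q; split; last by rewrite -(cycle_edges_rot i uc) def defr.
rewrite -cyc_gcycle /cyc -defr -def.
by rewrite /gcycle size_rot rot_uniq rot_cycle.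
Qed.

End Main.

Section Main.
Variable V : finType.
Variable e : rel V.

Lemma ends_uniq (q : seq V) : good_path e q -> uniq (ends q).
Proof.
case: q => [//|a [//|b t]] /and3P [_ uq _] /=.
rewrite andbT inE; apply/negP => /eqP h; move: uq; rewrite /= h mem_last //.
Qed.

Lemma size_ends_flatten (qs : seq (seq V)) : all (good_path e) qs ->
  size (flatten (map ends qs)) = (size qs).*2.
Proof.
elim: qs => [//|q qs IH] /= /andP [gq /IH h]; rewrite size_cat h.
by case: q gq => [//|a t] _ /=; rewrite doubleS.
Qed.

Lemma upper_aux (cs : seq (seq (option V))) : (forall c', ~~ gcycle e c') ->
  edge_disjoint_cycles (join_K1 e) cs ->
  exists qs, [/\ size qs = size cs, all (good_path e) qs, uniq (flatten (map ends qs)) &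
    forall q, q \in qs -> exists2 c, c \in cs & cycle_edges c = cycle_edges (cyc q)].
Proof.
move=> acyc; elim: cs => [|c cs IH]; first by move=> _; exists [::].
case=> /= /andP [gc gcs] /andP [dc pcs].
case: (IH (conj gcs pcs)) => qs [sz gqs uqs corr].
case: (gcycle_norm acyc gc) => q [gq eq].
exists (q :: qs); split => //=.
- by rewrite sz.
- by rewrite gq.
- rewrite cat_uniq ends_uniq // uqs andbT.
  apply/hasP => [[x /flattenP [l /mapP [d din ->] xd] xq]].
  case: (corr d din) => c' c'in eqc'.
  have h1 : [set None; Some x] \in cycle_edges c by rewrite eq (cyc_edge_ends gq).
  have h2 : [set None; Some x] \in cycle_edges c'.
    by rewrite eqc' (cyc_edge_ends (allP gqs d din)).
  by move: (allP dc c' c'in) => /disjointFr /(_ h1); rewrite h2.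
- move=> q'; rewrite inE => /orP [/eqP ->|/corr [c' c'in h]].
    by exists c; rewrite ?inE ?eqxx.
  by exists c'; rewrite ?inE ?c'in ?orbT.
Qed.

Lemma upper (cs : seq (seq (option V))) : (forall c', ~~ gcycle e c') ->
  edge_disjoint_cycles (join_K1 e) cs -> size cs <= #|V| %/ 2.
Proof.
move=> acyc /(upper_aux acyc) [qs [sz gqs uqs _]].
rewrite leq_divRL // -sz muln2 -(size_ends_flatten gqs) -(card_uniqP uqs).
exact: max_card.
Qed.

End Main.

Section Main.
Variable V : finType.
Variable e : rel V.

Lemma uedges_sub (q : seq V) A x : A \in uedges q -> x \in A -> x \in q.
Proof.
elim: q => [//|a q IH]; case: q IH => [//|b t] IH /=.
rewrite inE => /orP [/eqP -> | /IH h] xA.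
  by move: xA; rewrite !inE => /orP [] ->; rewrite ?orbT.
by rewrite inE (h xA) orbT.
Qed.

Lemma ends_sub (q : seq V) x : x \in ends q -> x \in q.
Proof.
case: q => [//|a t]; rewrite !inE => /orP [] /eqP ->; rewrite ?eqxx //. by rewrite -in_cons mem_last.
Qed.

Lemma uedges_flat_sub (ps : seq (seq V)) A x :
  A \in flatten (map uedges ps) -> x \in A -> x \in flatten ps.
Proof.
case/flattenP => l /mapP [q qin ->] Aq xA.
by apply/flattenP; exists q => //; apply: uedges_sub Aq xA.
Qed.

Lemma ends_flat_sub (ps : seq (seq V)) x :
  x \in flatten (map ends ps) -> x \in flatten ps.
Proof.
case/flattenP => l /mapP [q qin ->] xq.
by apply/flattenP; exists q => //; apply: ends_sub.
Qed.

Lemma uedges_rcons (a : V) t z : uedges (rcons (a::t) z) = rcons (uedges (a::t)) [set last a t; z].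
Proof.
by elim: t a => [|b t IH] a //=; rewrite -IH.
Qed.

Lemma extend (q : seq V) p l : symmetric e -> good_path e q -> p \in ends q -> l \notin q -> e l p ->
  exists q' o, [/\ good_path e q', {subset q' <= l :: q},
    perm_eq (uedges q') ([set l; p] :: uedges q),
    perm_eq (ends q) [:: p; o] & perm_eq (ends q') [:: l; o]].
Proof.
move=> esym; case: q => [//|a t] /and3P [sz uq sq]; rewrite !inE => /orP [] /eqP -> lq elp.
  exists (l :: a :: t), (last a t); split => //.
  by rewrite /good_path /= inE lq elp; move: uq sq => /= /andP [-> ->] ->.
exists (rcons (a :: t) l), a; split.
- rewrite /good_path size_rcons rcons_uniq in_cons lq uq /= rcons_path esym elp andbT; exact: sq.
- by move=> x; rewrite mem_rcons.
- rewrite uedges_rcons perm_rcons.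
  have -> : [set last a t; l] = [set l; last a t] by apply/setP => z; rewrite !inE orbC.
  by [].
- by rewrite /= -(perm_rcons a [:: last a t]).
- by rewrite /= last_rcons -(perm_rcons a [:: l]).
Qed.

End Main.

Section Main.
Variable V : finType.
Variable e : rel V.
Hypothesis esym : symmetric e.

Fixpoint grown (s : seq V) : bool :=
  if s is x :: s' then grown s' && ((s' == [::]) || has (e x) s') else true.

Definition pinv (s X : seq V) (ps : seq (seq V)) :=
  [/\ all (good_path e) ps, {subset flatten ps <= s}, uniq (flatten (map uedges ps)),
      uniq (flatten (map ends ps)) & flatten (map ends ps) =i X].

Lemma pinv_perm s X ps ps' : perm_eq ps ps' -> pinv s X ps -> pinv s X ps'.
Proof.
move=> pp [a b c d f]; split.
- by rewrite -(perm_all _ pp).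
- by move=> x; rewrite -(perm_mem (perm_flatten pp)); apply: b.
- by rewrite -(perm_uniq (perm_flatten (perm_map _ pp))).
- by rewrite -(perm_uniq (perm_flatten (perm_map _ pp))).
- by move=> x; rewrite -(perm_mem (perm_flatten (perm_map _ pp))).
Qed.

Lemma pairing s : uniq s -> grown s -> forall X, uniq X -> {subset X <= s} ->
  ~~ odd (size X) -> exists ps, pinv s X ps.
Proof.
elim: s => [|l s IH] us gs X uX sX eX.
  exists [::]; split => //= x; case: X sX {uX eX} => [//|y X] /(_ y).
  by rewrite inE eqxx => /(_ isT).
move: us gs => /= /andP [ls us] /andP [gs hs].
have subW : forall t : seq V, {subset t <= s} -> {subset t <= l :: s}.
  by move=> t h x /h xs; rewrite inE xs orbT.
case lX: (l \in X); last first.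
  have sX' : {subset X <= s}.
    move=> x xX; move: (sX x xX); rewrite inE => /orP [/eqP xl|//].
    by move: lX; rewrite -xl xX.
  case: (IH us gs X uX sX' eX) => ps [a b c d f].
  by exists ps; split => //; apply: subW.
set X0 := rem l X.
have pX : perm_eq X (l :: X0) := perm_to_rem lX.
have uX0 : uniq X0 := rem_uniq l uX.
have lX0 : l \notin X0 by move: uX; rewrite (perm_uniq pX) => /andP [].
have sX0 : {subset X0 <= s}.
  move=> x xX0; move: (sX x (mem_rem xX0)); rewrite inE => /orP [/eqP xl|//].
  by move: lX0; rewrite -xl xX0.
have eX0 : odd (size X0) by move: eX; rewrite (perm_size pX) /= negbK.
move: hs => /orP [/eqP s0 | /hasP [p ps_ elp]].
  by move: sX0 eX0; rewrite s0; case: (X0) => [//|y ?] /(_ y); rewrite inE eqxx => /(_ isT).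
have lp : l != p by apply: contraNneq ls => ->.
case pX0: (p \in X0).
  set X' := rem p X0.
  have pX' : perm_eq X0 (p :: X') := perm_to_rem pX0.
  have uX' : uniq X' := rem_uniq p uX0.
  have pnX' : p \notin X' by move: uX0; rewrite (perm_uniq pX') => /andP [].
  have sX' : {subset X' <= s} by move=> x /mem_rem /sX0.
  have eX' : ~~ odd (size X') by move: eX0; rewrite (perm_size pX').
  case: (IH us gs X' uX' sX' eX') => ps [a b c d f].
  exists ([:: l; p] :: ps); split.
  - by rewrite /= a /good_path /= inE lp elp.
  - move=> x; rewrite /= !inE => /orP [->//|/orP [/eqP ->|/b xs]]; by rewrite ?ps_ ?xs orbT.
  - rewrite /= c andbT; apply/negP => h; have := @uedges_flat_sub _ _ _ l h.
    by rewrite !inE eqxx => /(_ isT) /b; apply/negP.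
  - rewrite /= d andbT !inE negb_or lp /=.
    apply/andP; split; apply/negP => h.
      by move: (b l (ends_flat_sub h)); apply/negP.
    by move: h; rewrite f; apply/negP.
  - by move=> x; rewrite (perm_mem pX) /= !inE (perm_mem pX') !inE f.
have uX' : uniq (p :: X0) by rewrite /= pX0.
have sX' : {subset p :: X0 <= s} by move=> x; rewrite inE => /orP [/eqP ->|/sX0].
have eX1 : ~~ odd (size (p :: X0)) by rewrite /= negbK.
case: (IH us gs (p :: X0) uX' sX' eX1) => ps [a b c d f].
have : p \in flatten (map ends ps) by rewrite f inE eqxx.
case/flattenP => _ /mapP [q qin ->] pq.
have [] := pinv_perm (perm_to_rem qin) (And5 a b c d f).
set R := rem q ps => /= /andP [gq gR] bR cR dR fR.
have lq : l \notin q by apply/negP => lq; move: ls; rewrite (b l) //; apply/flattenP; exists q.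
case: (extend esym gq pq lq elp) => q' [o [gq' sq' pu pe pe']].
exists (q' :: R); split.
- by rewrite /= gq' gR.
- move=> x; rewrite /= mem_cat => /orP [/sq'|xR].
    by rewrite !inE => /orP [->//|xq]; rewrite (bR x) ?orbT // mem_cat xq.
  by rewrite inE (bR x) ?orbT // mem_cat xR orbT.
- rewrite /= (perm_uniq (perm_cat pu (perm_refl _))) /= cR andbT.
  apply/negP => h; have := @uedges_flat_sub _ (q :: R) _ l h.
  by rewrite !inE eqxx => /(_ isT) /bR; apply/negP.
- rewrite /= (perm_uniq (perm_cat pe' (perm_refl _))) /=.
  move: dR; rewrite /= (perm_uniq (perm_cat pe (perm_refl _))) /= => /andP [_ ->]; rewrite andbT.
  apply/negP => h; move: ls; rewrite (bR l) //.
  have : l \in ends q ++ flatten [seq ends i | i <- R].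
    move: h; rewrite !inE => /orP [/eqP ->|h]; last by rewrite mem_cat h orbT.
    by rewrite mem_cat (perm_mem pe) !inE eqxx orbT.
  by move/(@ends_flat_sub _ (q :: R)).
- move=> x; rewrite (perm_mem pX) mem_cat (perm_mem pe') !inE.
  case: (eqVneq x l) => //= xl.
  have := fR x; rewrite mem_cat (perm_mem pe) !inE.
  case: (eqVneq x p) => [->|xp] /=; last by move=> ->.
  move=> _; rewrite pX0.
  move: dR; rewrite /= (perm_uniq (perm_cat pe (perm_refl _))) /= !inE negb_or => /andP [/andP [po pR] _].
  by rewrite (negbTE po) (negbTE pR).
Qed.

End Main.

Section Main.
Variable V : finType.
Variable e : rel V.
Hypothesis esym : symmetric e.

Lemma cross (s : seq V) x p : x \in s -> path e x p -> last x p \notin s ->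
  exists u v, [/\ u \in s, v \notin s & e u v].
Proof.
elim: p x => [|y p IH] x xs /=; first by rewrite xs.
case/andP => exy pp ly; case ys: (y \in s); first exact: IH ys pp ly.
by exists x, y; rewrite ys.
Qed.

Lemma grow k : 0 < k <= #|V| -> connected e -> exists s, [/\ uniq s, grown e s & size s = k].
Proof.
move=> + conn; elim: k => [//|k IH] /andP [_ kn].
case: k IH kn => [|k] IH kn.
  by move: kn => /card_gt0P [x _]; exists [:: x].
case: IH => [|s [us gs ss]]; first by rewrite /= ltnW.
have [y ys] : exists y, y \notin s.
  apply/existsP; rewrite -negb_forall; apply/negP => /forallP ally.
  have := uniq_leq_size (enum_uniq V) (fun y _ => ally y).
  by rewrite -cardT ss leqNgt kn.
case: s ys us gs ss => [//|x s'] ys us gs ss.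
case/connectP: (conn x y) => p pp yl.
case: (cross (mem_head x s') pp); first by rewrite -yl.
move=> u [v [us' vs euv]].
exists (v :: x :: s'); split.
- by rewrite /= vs; exact: us.
- rewrite /= -/(grown e (x :: s')) gs /= -/(has (e v) (x :: s')); apply/hasP; exists u => //; by rewrite esym.
- by rewrite -ss.
Qed.

Lemma pw (ps : seq (seq V)) : all (good_path e) ps -> uniq (flatten (map uedges ps)) ->
  uniq (flatten (map ends ps)) ->
  pairwise (fun c d => [disjoint cycle_edges c & cycle_edges d]) (map cyc ps).
Proof.
elim: ps => [//|q ps IH] /= /andP [gq gps] /[dup] uu.
rewrite cat_uniq => /and3P [_ nu uu'] /[dup] ue.
rewrite cat_uniq => /and3P [_ ne ue'].
rewrite IH // andbT; apply/allP => _ /mapP [d din ->].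
have gd := allP gps d din.
have sq : 0 < size q by case/and3P: gq => /ltnW.
have sd : 0 < size d by case/and3P: gd => /ltnW.
rewrite disjoint_subset; apply/subsetP => E /(cyc_edgesP sq) hq; rewrite inE; apply/negP => /(cyc_edgesP sd) hd.
case: hq => [[a aq ?]|[A Aq ?]]; subst E; case: hd => [[b bd]|[B Bd]].
- move=> h; have : Some a \in [set None; Some b] by rewrite -h !inE eqxx orbT.
  rewrite !inE => /eqP [ab]; move/hasP: ne; apply; exists a => //.
  by apply/flattenP; exists (ends d); [apply/map_f | rewrite ab].
- move=> h; have : None \in [set Some x | x in B] by rewrite -h !inE eqxx.
  by case/imsetP.
- move=> h; have : None \in [set Some x | x in A] by rewrite h !inE eqxx.
  by case/imsetP.
- move/(imset_inj (@Some_inj _)) => AB; move/hasP: nu; apply; exists A => //.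
  by apply/flattenP; exists (uedges d); [apply/map_f | rewrite AB].
Qed.

End Main.

Theorem corollary2p1 (V : finType) (e : rel V) :
  is_tree e -> is_phi (join_K1 e) (#|V| %/ 2).
Proof.
case=> [[esym irr] n0 conn acyc]; split; last first.
  by move=> k [cs [dc <-]]; apply: upper dc.
have := @grow _ e esym #|V|; rewrite n0 leqnn => /(_ isT conn) [s [us gs ss]].
set X := drop (odd (size s)) s.
have uX : uniq X by apply: drop_uniq.
have sX : {subset X <= s} by move=> x /mem_drop.
have hn := odd_double_half #|V|.
have sXe : size X = (#|V|./2).*2 by rewrite /X size_drop ss; lia.
have eX : ~~ odd (size X) by rewrite sXe odd_double.
case: (pairing esym us gs uX sX eX) => ps [a b c d f].
exists (map cyc ps); split; last first.
  rewrite size_map divn2.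
  have := perm_size (uniq_perm d uX f); rewrite (size_ends_flatten a) sXe.
  exact: double_inj.
split; last exact: (pw a c d).
by apply/allP => _ /mapP [q qin ->]; rewrite cyc_gcycle (allP a).
Qed.
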